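(* Let $P_n$ be the path on $n$ vertices. (1) If $n$ is even, then $\mathcal{Z}^{\mathrm{TE}}_-(P_n)=\mathcal{Z}^{\mathrm{TS}}_-(P_n)\cong K_1$. (2) If $n$ is odd, then $\mathcal{Z}^{\mathrm{TE}}_-(P_n)\cong K_{(n+1)/2}$ and $\mathcal{Z}^{\mathrm{TS}}_-(P_n)\cong \frac{n+1}{2}K_1$ (the edgeless graph on $(n+1)/2$ vertices).
   Context: Skew forcing: vertices are colored blue or white; if any vertex $u$ (blue or white) has exactly one white neighbor $v$, then $u$ may force $v$ to become blue. A skew forcing set is a (possibly empty) set of initially blue vertices from which repeated application of this rule turns every vertex blue; $\mathrm{Z}_-(G)$ is the minimum size of a skew forcing set. $\mathcal{Z}^{\mathrm{TE}}_-(G)$ has as vertices the minimum skew forcing sets of $G$, with $S_1S_2$ an edge iff $S_1\setminus S_2=\{v_1\}$ and $S_2\setminus S_1=\{v_2\}$ for some vertices $v_1,v_2$; $\mathcal{Z}^{\mathrm{TS}}_-(G)$ has the same vertices with the additional requirement $v_1v_2\in E(G)$. *)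

(* Defs.v *)
(* Simple graphs are symmetric irreflexive relations on a finType. *)
From mathcomp Require Import all_boot all_order.
Set Implicit Arguments. Unset Strict Implicit. Unset Printing Implicit Defensive.

Section SkewForcing.
Variable T : finType.
Variable e : rel T.

Definition white_nbrs (B : {set T}) (u : T) : {set T} :=
  [set w | e u w & w \notin B].

(* one application of the skew forcing rule: some vertex u (blue or white)
   has exactly one white neighbour v, which becomes blue *)
Definition skew_step : rel {set T} := fun B B' =>
  [exists u, exists v, (white_nbrs B u == [set v]) && (B' == v |: B)].

Definition skew_forcing_set (S : {set T}) : bool :=
  connect skew_step S [set: T].

Definition min_skew_forcing_set (S : {set T}) : bool :=
  skew_forcing_set S &&
  [forall S' : {set T}, skew_forcing_set S' ==> (#|S| <= #|S'|)].

(* vertex set of Z^TE_-(G) and Z^TS_-(G) *)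
Definition ZV : {set {set T}} := [set S | min_skew_forcing_set S].

Definition TE_adj : rel {set T} := fun S1 S2 =>
  [exists v1, exists v2, (S1 :\: S2 == [set v1]) && (S2 :\: S1 == [set v2])].

Definition TS_adj : rel {set T} := fun S1 S2 =>
  [exists v1, exists v2,
     [&& S1 :\: S2 == [set v1], S2 :\: S1 == [set v2] & e v1 v2]].

End SkewForcing.

Definition path_graph (n : nat) : rel 'I_n :=
  fun i j => (i.+1 == j :> nat) || (j.+1 == i :> nat).

Definition complete_graph (m : nat) : rel 'I_m := fun i j => i != j.
Definition edgeless_graph (m : nat) : rel 'I_m := fun _ _ => false.

Definition graph_iso (X : finType) (V : {set X}) (adj : rel X)
    (m : nat) (adj' : rel 'I_m) : Prop :=
  exists f : X -> 'I_m,
    [/\ {in V &, injective f}, f @: V = [set: 'I_m] &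
        {in V &, forall x y, adj x y = adj' (f x) (f y)}].

Arguments path_graph n : clear implicits.
Arguments complete_graph m : clear implicits.
Arguments edgeless_graph m : clear implicits.

(* Main.v *)
Require Import Defs.
From mathcomp Require Import all_boot all_order.
From mathcomp Require Import zify.
Set Implicit Arguments. Unset Strict Implicit. Unset Printing Implicit Defensive.

Section Gen.
Variable T : finType.
Variable e : rel T.

Lemma closure (P : pred {set T}) :
  (forall B, P B -> B != setT -> exists u w, white_nbrs e B u == [set w] /\ P (w |: B)) ->
  forall B, P B -> connect (skew_step e) B setT.
Proof.
move=> H B; have [k] := ubnP #|~: B|; elim: k B => // k IH B Hk PB.
case: (B =P setT) => [->|/eqP nT]; first exact: connect0.
have [u [w [Hw Pw]]] := H B PB nT.
have wB : w \notin B.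
  by move: Hw => /eqP; rewrite /white_nbrs => /setP /(_ w); rewrite !inE eqxx => /andP[].
apply: connect_trans (connect1 _) (IH _ _ Pw).
  by apply/existsP; exists u; apply/existsP; exists w; rewrite Hw eqxx.
have h1 := cardsU1 w B; have h2 := cardsC B; have h3 := cardsC (w |: B).
rewrite wB /= in h1. lia.
Qed.

Lemma force1 (B : {set T}) u w : e u w -> w \notin B -> (forall x, e u x -> x != w -> x \in B) ->
  white_nbrs e B u == [set w].
Proof.
move=> euw wB H; apply/eqP/setP => x; rewrite !inE.
case: (x =P w) => [->|/eqP xw]; first by rewrite euw wB.
by apply/negbTE; apply/nandP; case exu: (e u x); [right; rewrite negbK H | left].
Qed.

Lemma TE_single (a b : T) : TE_adj [set a] [set b] = (a != b).
Proof.
apply/existsP/idP => [[v1 /existsP [v2 /andP [h _]]]|ab].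
  apply/eqP => ab; move: h; rewrite ab setDv => /eqP /setP /(_ v1).
  by rewrite !inE eqxx.
exists a; apply/existsP; exists b.
have -> : [set a] :\: [set b] = [set a].
  by apply/setP => x; rewrite !inE; case: (x =P a) => [->|]; rewrite ?andbF // ab.
have -> : [set b] :\: [set a] = [set b].
  by apply/setP => x; rewrite !inE; case: (x =P b) => [->|]; rewrite ?andbF // eq_sym ab.
by rewrite !eqxx.
Qed.

Lemma TS_single (a b : T) : TS_adj e [set a] [set b] -> e a b.
Proof.
move=> /existsP [v1 /existsP [v2 /and3P [h1 h2 h3]]].
have : v1 \in [set a] :\: [set b] by rewrite (eqP h1) inE.
have : v2 \in [set b] :\: [set a] by rewrite (eqP h2) inE.
by rewrite !inE => /andP [_ /eqP ?] /andP [_ /eqP ?]; subst.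
Qed.

Lemma TE_same (S : {set T}) : TE_adj S S = false.
Proof.
apply/negbTE/existsP => [[v1 /existsP [v2 /andP [h _]]]].
by move: h; rewrite setDv => /eqP /setP /(_ v1); rewrite !inE eqxx.
Qed.

Lemma TS_same (S : {set T}) : TS_adj e S S = false.
Proof.
apply/negbTE/existsP => [[v1 /existsP [v2 /and3P [h _ _]]]].
by move: h; rewrite setDv => /eqP /setP /(_ v1); rewrite !inE eqxx.
Qed.

End Gen.

Section Path.
Variable m : nat.
Local Notation N := m.+1.
Local Notation e := (path_graph m.+1).

Lemma nbrP (u x : 'I_N) : e u x -> nat_of_ord x = (nat_of_ord u).+1 \/ (nat_of_ord x).+1 = nat_of_ord u.
Proof. by rewrite /path_graph => /orP[/eqP|/eqP]; auto. Qed.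

Definition wh (B : {set 'I_N}) (i : nat) := (i < N) && (inord i \notin B).
Lemma whE B (x : 'I_N) : wh B x = (x \notin B).
Proof. by rewrite /wh ltn_ord inord_val. Qed.
Lemma whB B (x : 'I_N) i : nat_of_ord x = i -> ~~ wh B i -> x \in B.
Proof. by move=> <-; rewrite whE negbK. Qed.
Lemma whN B i : wh B i -> i < N.
Proof. by case/andP. Qed.
Lemma whI B i : wh B i -> (@inord m i) \notin B.
Proof. by case/andP. Qed.

Lemma descend (P : nat -> bool) k : P k -> exists j, j <= k /\ P j /\ (j = 0 \/ ~~ P j.-1).
Proof.
elim: k => [|k IH] Pk; first by exists 0; split => //; split => //; left.
case: (boolP (P k)) => [/IH [j [? [? ?]]]|nPk].
  by exists j; split => //; lia.
by exists k.+1; split => //; split => //; right.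
Qed.

Lemma ascend (P : nat -> bool) M k : k <= M -> P k ->
  exists j, k <= j <= M /\ P j /\ (j = M \/ ~~ P j.+1).
Proof.
move=> hk; have [d hd] : exists d, M = k + d by exists (M - k); lia.
elim: d k hk hd => [|d IH] k hk hd Pk.
  by exists k; split; [lia| split => //; left; lia].
case: (boolP (P k.+1)) => [Pk1|nPk].
  have [j [? [? ?]]] := IH k.+1 ltac:(lia) ltac:(lia) Pk1.
  by exists j; split => //; lia.
by exists k; split; [lia | split => //; right].
Qed.

Lemma odd_white (B : {set 'I_N}) : (exists x : 'I_N, odd x && (x \notin B)) ->
  exists u w, white_nbrs e B u == [set w].
Proof.
move=> [x /andP[ox xB]].
have Pk : wh B (x./2).*2.+1 by rewrite (_ : (x./2).*2.+1 = x) ?whE //; lia.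
have [j [hj [Pj hj']]] := descend (P := fun k => wh B k.*2.+1) Pk.
have hN := whN Pj.
exists (inord j.*2), (inord j.*2.+1); apply: force1.
- by rewrite /path_graph !inordK ?eqxx //; lia.
- exact: whI.
- move=> y /nbrP; rewrite inordK; last lia.
  case=> hy hyw.
    by exfalso; apply: (negP hyw); apply/eqP/val_inj; rewrite /= inordK // hy.
  case: hj' => [j0|hP]; first lia.
  by apply: (whB _ hP); lia.
Qed.

Lemma exists_white (B : {set 'I_N}) : B != setT -> exists x, x \notin B.
Proof.
move=> nT; have : ~~ ([set: 'I_N] \subset B) by rewrite subTset.
by case/subsetPn => x _ xB; exists x.
Qed.

Lemma even_force (v : 'I_N) : odd N -> ~~ odd v -> connect (skew_step e) [set v] setT.
Proof.
move=> oN ev.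
apply: (closure (P := fun B => v \in B)); last by rewrite inE.
move=> B vB nT.
suff [u [w H]] : exists u w, white_nbrs e B u == [set w].
  by exists u, w; split => //; rewrite inE vB orbT.
case: (boolP [exists x : 'I_N, odd x && (x \notin B)]) => [/existsP|]; first exact: odd_white.
rewrite negb_exists => /forallP allodd.
have [x xB] := exists_white nT.
have ex : ~~ odd x by move: (allodd x); rewrite xB andbT.
case: (ltngtP x v) => [xv|vx|/val_inj xv]; last by subst; rewrite vB in xB.
- have Pk : wh B (x./2).*2 by rewrite (_ : (x./2).*2 = x) ?whE //; lia.
  have [|j [hj [Pj hj']]] := ascend (P := fun k => wh B k.*2) (M := v./2) _ Pk; first lia.
  case: hj' => [jM|hP].
    by move: Pj; rewrite jM (_ : (v./2).*2 = v); [rewrite whE vB | lia].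
  have hv := ltn_ord v.
  have jv : j.*2 != v by apply: contraTneq Pj => ->; rewrite whE vB.
  exists (inord j.*2.+1), (inord j.*2); apply: force1.
  + by rewrite /path_graph !inordK ?eqxx ?orbT //; lia.
  + exact: whI.
  + move=> y /nbrP; rewrite inordK; last lia.
    case=> hy hyw; last first.
      by exfalso; apply: (negP hyw); apply/eqP/val_inj; rewrite /= inordK //; lia.
    by apply: (whB _ hP); lia.
- have Pk : wh B (v + ((x - v)./2).*2) by rewrite (_ : v + ((x - v)./2).*2 = x) ?whE //; lia.
  have [j [hj [Pj hj']]] := descend (P := fun k => wh B (v + k.*2)) Pk.
  have hN := whN Pj.
  case: hj' => [j0|hP].
    by move: Pj; rewrite j0 addn0 whE vB.
  have j0 : 0 < j.
    by apply: contraTT Pj; rewrite -eqn0Ngt => /eqP ->; rewrite double0 addn0 whE vB.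
  exists (inord (v + j.*2).-1), (inord (v + j.*2)); apply: force1.
  + by rewrite /path_graph !inordK ?eqxx //; lia.
  + exact: whI.
  + move=> y /nbrP; rewrite inordK; last lia.
    case=> hy hyw.
      by exfalso; apply: (negP hyw); apply/eqP/val_inj; rewrite /= inordK //; lia.
    by apply: (whB _ hP); lia.
Qed.

Lemma even_force0 : ~~ odd N -> connect (skew_step e) set0 setT.
Proof.
move=> eN.
apply: (closure (P := fun B => true)) => // B _ nT.
suff [u [w H]] : exists u w, white_nbrs e B u == [set w] by exists u, w.
case: (boolP [exists x : 'I_N, odd x && (x \notin B)]) => [/existsP|]; first exact: odd_white.
rewrite negb_exists => /forallP allodd.
have [x xB] := exists_white nT.
have ex : ~~ odd x by move: (allodd x); rewrite xB andbT.
have hx := ltn_ord x.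
have Pk : wh B (x./2).*2 by rewrite (_ : (x./2).*2 = x) ?whE //; lia.
have [|j [hj [Pj hj']]] := ascend (P := fun k => wh B k.*2) (M := m./2) _ Pk; first lia.
have hN := whN Pj.
exists (inord j.*2.+1), (inord j.*2); apply: force1.
- by rewrite /path_graph !inordK ?eqxx ?orbT //; lia.
- exact: whI.
- move=> y /nbrP; rewrite inordK; last lia.
  case=> hy hyw; last first.
    by exfalso; apply: (negP hyw); apply/eqP/val_inj; rewrite /= inordK //; lia.
  case: hj' => [jM|hP].
    by have := ltn_ord y; lia.
  by apply: (whB _ hP); lia.
Qed.

Lemma odd_inv (B B' : {set 'I_N}) : odd N -> connect (skew_step e) B B' ->
  (forall x : 'I_N, x \in B -> odd x) -> (forall x : 'I_N, x \in B' -> odd x).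
Proof.
move=> oN /connectP [p]; elim: p B => [|B1 p IH] B /=; first by move=> _ ->.
move=> /andP[st pth] Bl HB; apply: (IH B1 pth Bl).
move: st => /existsP[u /existsP[w /andP[hw /eqP ->]]] x; rewrite in_setU1 => /orP[/eqP ->|]; last exact: HB.
apply/negPn/negP => ew.
have wW : w \in white_nbrs e B u by rewrite (eqP hw) inE.
move: wW; rewrite inE => /andP[euw _].
have hu := ltn_ord u.
have [y [eyu yw ey]] : exists y : 'I_N, [/\ e u y, nat_of_ord y != nat_of_ord w & ~~ odd y].
  case/nbrP: euw => h.
    exists (inord w.-2); rewrite /path_graph inordK; last lia.
    by split; [apply/orP; right; apply/eqP; lia | apply/eqP; lia | lia].
  exists (inord w.+2); rewrite /path_graph inordK; last lia.
  by split; [apply/orP; left; apply/eqP; lia | apply/eqP; lia | lia].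
have : y \in white_nbrs e B u.
  rewrite inE eyu /=; apply/negP => yB; by move: (HB y yB); rewrite (negbTE ey).
by rewrite (eqP hw) inE => /eqP yw'; rewrite yw' eqxx in yw.
Qed.

Lemma has_even (S : {set 'I_N}) : odd N -> skew_forcing_set e S -> exists2 x, x \in S & ~~ odd x.
Proof.
move=> oN fS.
case: (boolP [exists x, (x \in S) && ~~ odd x]) => [/existsP[x /andP[]]|]; first by eauto.
rewrite negb_exists => /forallP hx; exfalso.
have Hodd : forall x : 'I_N, x \in S -> odd x.
  by move=> x xS; move: (hx x); rewrite xS /= negbK.
by move: (odd_inv oN fS Hodd (in_setT ord0)).
Qed.

End Path.

Lemma ZV_even m : ~~ odd m.+1 -> forall S, (S \in ZV (path_graph m.+1)) = (S == set0).
Proof.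
move=> en S; rewrite inE /min_skew_forcing_set.
apply/andP/eqP => [[fS /forallP H]|->].
  move/implyP: (H set0) => /(_ (even_force0 en)).
  by rewrite cards0 leqn0 cards_eq0 => /eqP.
split; first exact: even_force0.
by apply/forallP => S'; apply/implyP => _; rewrite cards0.
Qed.

Lemma ZV_odd m : odd m.+1 -> forall S,
  (S \in ZV (path_graph m.+1)) = [exists v : 'I_m.+1, ~~ odd v && (S == [set v])].
Proof.
move=> on S; rewrite inE /min_skew_forcing_set.
apply/andP/existsP => [[fS /forallP H]|[v /andP[ev /eqP->]]].
  have [x xS ex] := has_even on fS.
  move/implyP: (H [set ord0]) => /(_ (@even_force m ord0 on isT)).
  rewrite cards1 => hc.
  have c1 : #|S| == 1 by rewrite eqn_leq hc card_gt0; apply/set0Pn; exists x.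
  move/cards1P: c1 => [y Sy]; move: xS; rewrite Sy inE => /eqP xy; subst.
  by exists y; rewrite ex eqxx.
split; first exact: even_force.
apply/forallP => S'; apply/implyP => fS'; rewrite cards1 card_gt0.
by have [x xS _] := has_even on fS'; apply/set0Pn; exists x.
Qed.

Theorem theorem5p7 (n : nat) (hn : 0 < n) :
  (~~ odd n ->
     {in ZV (path_graph n) &, forall S1 S2,
         TE_adj S1 S2 = TS_adj (path_graph n) S1 S2} /\
     graph_iso (ZV (path_graph n)) (@TE_adj _) (complete_graph 1) /\
     graph_iso (ZV (path_graph n)) (TS_adj (path_graph n)) (complete_graph 1)) /\
  (odd n ->
     graph_iso (ZV (path_graph n)) (@TE_adj _) (complete_graph (n.+1 %/ 2)) /\
     graph_iso (ZV (path_graph n)) (TS_adj (path_graph n)) (edgeless_graph (n.+1 %/ 2))).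
Proof.
case: n hn => // m _; split.
  move=> en; have Z := ZV_even en.
  have inj : {in ZV (path_graph m.+1) &, injective (fun _ : {set 'I_m.+1} => (ord0 : 'I_1))}.
    by move=> S1 S2; rewrite !Z => /eqP-> /eqP->.
  have img : (fun _ : {set 'I_m.+1} => (ord0 : 'I_1)) @: ZV (path_graph m.+1) = [set: 'I_1].
    apply/setP => i; rewrite (ord1 i) inE; apply/imsetP; exists set0 => //.
    by rewrite Z.
  split; first by move=> S1 S2; rewrite !Z => /eqP-> /eqP->; rewrite TE_same TS_same.
  split; exists (fun _ => ord0); split => // S1 S2; rewrite !Z => /eqP-> /eqP->.
    by rewrite TE_same /complete_graph eqxx.
  by rewrite TS_same /complete_graph eqxx.
move=> on; have Z := ZV_odd on.
have hK : m.+2 %/ 2 = (m./2).+1 by lia.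
rewrite hK.
pose f (S : {set 'I_m.+1}) : 'I_(m./2).+1 := inord ((odflt ord0 [pick x in S])./2).
have fE : forall v, f [set v] = inord (v./2).
  move=> v; rewrite /f; case: pickP => [y|/(_ v)]; rewrite !inE ?eqxx // => /eqP->.
  by [].
have inj : {in ZV (path_graph m.+1) &, injective f}.
  move=> S1 S2; rewrite !Z => /existsP[a /andP[ea /eqP->]] /existsP[b /andP[eb /eqP->]].
  rewrite !fE => /(congr1 val); rewrite /= !inordK; try (have := ltn_ord a; have := ltn_ord b; lia).
  by move=> h; have -> : a = b by apply: ord_inj; have := ltn_ord a; have := ltn_ord b; lia.
have img : f @: ZV (path_graph m.+1) = [set: 'I_(m./2).+1].
  apply/setP => i; rewrite inE; apply/imsetP; exists [set (inord i.*2 : 'I_m.+1)].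
    rewrite Z; apply/existsP; exists (inord i.*2); rewrite eqxx andbT inordK ?odd_double //.
    by have := ltn_ord i; lia.
  apply: ord_inj; rewrite fE /= !inordK //; have := ltn_ord i; lia.
split; exists f; split => // S1 S2;
  rewrite !Z => /existsP[a /andP[ea /eqP->]] /existsP[b /andP[eb /eqP->]].
  rewrite TE_single /complete_graph !fE; congr (~~ _).
  apply/eqP/eqP => [->//|/(congr1 val)]; rewrite /= !inordK;
    try (have := ltn_ord a; have := ltn_ord b; lia).
  by move=> h; apply: ord_inj; have := ltn_ord a; have := ltn_ord b; lia.
rewrite /edgeless_graph; apply/negbTE/negP => /TS_single.
by rewrite /path_graph => /orP[]/eqP; lia.
Qed.
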